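(* Let $c\in\mathbb{N}$, $c\ge1$, and let $F=(n_F)_{n\ge0}$ with $0_F=1$ and $n_F=c\,n$ for $n\ge1$. Then for all $1\le a\le b$, the layer $\langle\Phi_a\to\Phi_b\rangle$ of the cobweb poset of $F$ admits a tiling by blocks of type $\sigma P_{b-a+1}$.
   Context: Notation: $n_F\equiv F_n$. The cobweb poset of $F$ has, for each $s\ge1$, a level $\Phi_s$ consisting of $s_F$ distinct vertices (levels pairwise disjoint), plus a root level $\Phi_0$ with one vertex; for $x\in\Phi_i$, $y\in\Phi_j$ one has $x<y$ iff $i<j$. For $1\le a\le b$, the layer $\langle\Phi_a\to\Phi_b\rangle$ is the subposet on $\Phi_a\cup\dots\cup\Phi_b$; it has $m=b-a+1$ levels and its maximal chains form the set $\Phi_a\times\dots\times\Phi_b$. For a permutation $\sigma$ of $\{1,\dots,m\}$, a block of type $\sigma P_m$ in this layer is the subposet induced on $V_a\cup\dots\cup V_b$ where $V_{a-1+i}\subseteq\Phi_{a-1+i}$ and $|V_{a-1+i}|=\sigma(i)_F$ for $i=1,\dots,m$; its maximal chains form the set $V_a\times\dots\times V_b$. A tiling of the layer is a finite family of such blocks ($\sigma$ may vary from block to block) whose sets $V_a\times\dots\times V_b$ partition $\Phi_a\times\dots\times\Phi_b$ (pairwise max-disjoint and covering all maximal chains). *)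

(* Defs.v *)
From mathcomp Require Import all_boot all_fingroup.
Set Implicit Arguments. Unset Strict Implicit. Unset Printing Implicit Defensive.

(* Level Phi_s of the cobweb poset has F s vertices; we realise the vertices
   of Phi_s (for the layer <Phi_a -> Phi_b>) as the elements x of the ambient
   finite type 'I_(cobweb_bound F b) with x < F s.  The level of a vertex is
   recorded by the index of the coordinate in a chain, so levels are disjoint. *)
Definition cobweb_bound (F : nat -> nat) (b : nat) : nat := \max_(s < b.+1) F s.

Notation vtx F b := 'I_(cobweb_bound F b).

(* Number of levels m = b - a + 1; coordinate i : 'I_m corresponds to level a + i. *)
Notation nlev a b := (b - a).+1.

Definition level (F : nat -> nat) (b s : nat) : {set vtx F b} :=
  [set x : vtx F b | x < F s].

(* Maximal chains of the layer <Phi_a -> Phi_b> : Phi_a x ... x Phi_b. *)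
Definition layer_chains (F : nat -> nat) (a b : nat)
  : {set {ffun 'I_(nlev a b) -> vtx F b}} :=
  [set f : {ffun 'I_(nlev a b) -> vtx F b} | [forall i, f i \in level F b (a + i)]].

(* A block candidate: a permutation sigma of {1..m} (encoded as 'S_m on
   {0..m-1}, value sigma i + 1) and the vertex subsets V_{a+i}. *)
Definition block (F : nat -> nat) (a b : nat) : Type :=
  ('S_(nlev a b) * {ffun 'I_(nlev a b) -> {set vtx F b}})%type.

Definition is_block (F : nat -> nat) (a b : nat) (B : block F a b) : bool :=
  [forall i, (B.2 i \subset level F b (a + i)) && (#|B.2 i| == F (B.1 i).+1)].

Definition block_chains (F : nat -> nat) (a b : nat) (B : block F a b)
  : {set {ffun 'I_(nlev a b) -> vtx F b}} :=
  [set f : {ffun 'I_(nlev a b) -> vtx F b} | [forall i, f i \in B.2 i]].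

Definition is_tiling (F : nat -> nat) (a b : nat) (Bs : seq (block F a b)) : Prop :=
  [/\ forall B, B \in Bs -> is_block B,
      forall j k, j < size Bs -> k < size Bs -> j <> k ->
        forall B0 : block F a b,
          [disjoint block_chains (nth B0 Bs j) & block_chains (nth B0 Bs k)]
    & \bigcup_(B <- Bs) block_chains B = layer_chains F a b].

Definition cF (c : nat) (n : nat) : nat := if n == 0 then 1 else c * n.

(* Main.v *)
Require Import Defs.
From mathcomp Require Import all_boot all_fingroup.
From Stdlib Require List.
Set Implicit Arguments. Unset Strict Implicit. Unset Printing Implicit Defensive.

Lemma card_ltset N p : p <= N -> #|[set x : 'I_N | x < p]| = p.
Proof.
elim: p => [|p IH] hp.
  by apply/eqP; rewrite cards_eq0; apply/eqP/setP => x; rewrite !inE.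
have -> : [set x : 'I_N | x < p.+1] = Ordinal hp |: [set x : 'I_N | x < p].
  by apply/setP => x; rewrite !inE ltnS leq_eqVlt -val_eqE.
by rewrite cardsU1 inE ltnn IH // ltnW.
Qed.

Lemma count_nth_uniq (T : Type) (p : pred T) (s : seq T) x0 j k :
  count p s <= 1 -> j < size s -> k < size s -> p (nth x0 s j) -> p (nth x0 s k) -> j = k.
Proof.
elim: s j k => [//|x s IH] [|j] [|k] //=.
- move=> h _ hk px pk; have : has p s by apply/(has_nthP x0); exists k.
  by rewrite has_count; move: h; rewrite px add1n ltnS leqn0 => /eqP ->.
- move=> h hj _ pj px; have : has p s by apply/(has_nthP x0); exists j.
  by rewrite has_count; move: h; rewrite px add1n ltnS leqn0 => /eqP ->.
- move=> h hj hk pj pk; congr S; apply: IH hj hk pj pk.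
  by apply: leq_trans h; rewrite leq_addl.
Qed.

Lemma in_bigcup_seq (T U : finType) (s : seq U) (P : U -> {set T}) x :
  (x \in \bigcup_(B <- s) P B) = has (fun B => x \in P B) s.
Proof.
elim: s => [|B s IH]; first by rewrite big_nil in_set0.
by rewrite big_cons in_setU IH.
Qed.

Lemma in_map_In (T : Type) (U : eqType) (g : T -> U) (s : seq T) y :
  y \in map g s -> exists t, List.In t s /\ y = g t.
Proof.
elim: s => [//|t s IH] /=; rewrite in_cons => /orP [/eqP ->|/IH [t' [h1 h2]]].
  by exists t; split => //; left.
by exists t'; split => //; right.
Qed.
Lemma ex_subcard (V : finType) (S : {set V}) p :
  p <= #|S| -> exists X : {set V}, X \subset S /\ #|X| = p.
Proof.
elim: p => [|p IH] hp; first by exists set0; rewrite sub0set cards0.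
have [X [XS cX]] := IH (ltnW hp).
have : 0 < #|S :\: X| by rewrite cardsDS // cX subn_gt0.
case/card_gt0P => x; rewrite in_setD => /andP [xX xS].
exists (x |: X); rewrite subUset sub1set xS XS cardsU1 xX cX; split => //.
Qed.

Definition inbox (I V : finType) (S : I -> {set V}) (f : {ffun I -> V}) : bool :=
  [forall i, f i \in S i].

Definition tile (I V : finType) := ((I -> nat) * (I -> {set V}))%type.

Definition tgood (I V : finType) c (A : {set I}) m (S : I -> {set V}) (t : tile I V) :=
  [/\ forall i, i \in A -> [/\ t.2 i \subset S i, #|t.2 i| = c * t.1 i & 0 < t.1 i <= m],
      forall i j, i \in A -> j \in A -> t.1 i = t.1 j -> i = j
    & forall i, i \notin A -> t.2 i = S i].

Definition tiling (I V : finType) c (A : {set I}) m (S : I -> {set V}) (T : seq (tile I V)) :=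
  (forall t, List.In t T -> tgood c A m S t) /\
  (forall f, count (fun t : tile I V => inbox t.2 f) T = inbox S f).

Lemma main_gen (I V : finType) c m : forall a (A : {set I}) (S : I -> {set V}) (k : I -> nat),
  (forall i, i \in A -> #|S i| = c * k i /\ a <= k i < a + m) ->
  (forall i j, i \in A -> j \in A -> k i = k j -> i = j) ->
  (forall t, a <= t < a + m -> exists2 i, i \in A & k i = t) ->
  exists T, tiling c A m S T.
Proof.
elim: m => [|m IHm] a A S k H1 H2 H3.
  have A0 : forall i, i \notin A.
    move=> i; apply/negP => /H1 [_]; rewrite addn0 => /andP [h1 h2].
    by have := leq_ltn_trans h1 h2; rewrite ltnn.
  exists [:: (k, S)]; split.
    move=> t [<-|[]]; split => [i|i j|//]; by rewrite (negbTE (A0 i)).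
  by move=> f /=; rewrite addn0.
elim: a A S k H1 H2 H3 => [|a IHa] A S k H1 H2 H3.
  have [i iA ki] := H3 0 isT.
  exists [::]; split => // f /=.
  have := H1 i iA; rewrite ki muln0 => -[/eqP]; rewrite cards_eq0 => /eqP S0 _.
  suff /negbTE -> : ~~ inbox S f by [].
  apply/negP => /forallP /(_ i); by rewrite S0 in_set0.
have hjr : a.+1 <= a + m.+1 < a.+1 + m.+1 by rewrite addSn ltnSn andbT addnS ltnS leq_addr.
have [j jA kj] := H3 _ hjr.
have [cSj _] := H1 j jA.
have hle : c * a <= #|S j| by rewrite cSj kj mulnDr leq_addr.
have [X [XS cX]] := ex_subcard hle.
pose Y := S j :\: X.
have cY : #|Y| = c * m.+1 by rewrite cardsDS // cSj cX kj mulnDr addKn.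
pose S1 := fun i => if i == j then X else S i.
pose S2 := fun i => if i == j then Y else S i.
pose k1 := fun i => if i == j then a else k i.
have [T1 [G1 C1]] : exists T, tiling c A m.+1 S1 T.
  apply: (IHa A S1 k1).
  - move=> i iA; rewrite /S1 /k1; have [e|ij] := eqVneq i j; first subst i.
      by rewrite ?eqxx cX leqnn addnS ltnS leq_addr.
    rewrite ?(negbTE ij); have [-> /andP [h1 h2]] := H1 i iA; split => //.
    rewrite ltnW //=; move: h2; rewrite addSn ltnS leq_eqVlt => /orP [/eqP h|//].
    by case/eqP: ij; apply: H2 => //; rewrite kj h.
  - move=> i i' iA i'A; rewrite /k1; have [e|ij] := eqVneq i j; first subst i; have [e|ij'] := eqVneq i' j; try subst i';
      rewrite ?eqxx ?(negbTE ij) ?(negbTE ij') //.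
    + by move=> h; have := (H1 i' i'A).2; rewrite -h ltnn.
    + by move=> h; have := (H1 i iA).2; rewrite h ltnn.
    + exact: H2.
  - move=> t /andP [t1 t2]; case: (eqVneq t a) => [->|ta]; first by exists j; rewrite // /k1 eqxx.
    have [|i iA ki] := H3 t.
      by rewrite ltn_neqAle eq_sym ta t1 /= addSn ltnS ltnW.
    exists i => //; rewrite /k1; have [ij|ij] := eqVneq i j; last by [].
    by move: ki t2; rewrite ij kj => <-; rewrite ltnn.
have [T2 [G2 C2]] : exists T, tiling c (A :\ j) m S2 T.
  apply: (IHm a.+1 (A :\ j) S2 k).
  - move=> i; rewrite in_setD1 => /andP [ij iA]; rewrite /S2 (negbTE ij).
    have [-> /andP [h1 h2]] := H1 i iA; split => //; rewrite h1 /=.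
    move: h2; rewrite addnS ltnS leq_eqVlt => /orP [/eqP h|//].
    by case/negP: ij; apply/eqP; apply: H2 => //; rewrite h kj addSn addnS.
  - move=> i i'; rewrite !in_setD1 => /andP [_ iA] /andP [_ i'A]; exact: H2.
  - move=> t /andP [t1 t2]; have [|i iA ki] := H3 t.
      by rewrite t1 /= addnS ltnS ltnW.
    exists i => //; rewrite in_setD1 iA andbT; apply/eqP => ij.
    by move: t2; rewrite -ki ij kj addSn addnS ltnn.
exists (T1 ++ map (fun t : tile I V => ((fun i => if i == j then m.+1 else t.1 i), t.2)) T2).
split.
  move=> t /List.in_app_iff [/G1 [g1 g2 g3]|/List.in_map_iff [t' [<- /G2 [g1 g2 g3]]]].
    split.
    - move=> i iA; have [h1 h2 h3] := g1 i iA; split => //.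
      by apply: (subset_trans h1); rewrite /S1; case: eqP => // ->.
    - exact: g2.
    - by move=> i iA; rewrite g3 // /S1; case: eqP => // ij; move: iA; rewrite ij jA.
  split => /=.
  - move=> i iA; case: (eqVneq i j) => [e|ij]; first subst i.
      by rewrite g3 ?setD11 // /S2 ?eqxx subsetDl cY leqnn.
    have iA' : i \in A :\ j by rewrite in_setD1 ij.
    have [h1 h2 /andP [h3 h4]] := g1 i iA'.
    by split => //; [move: h1; rewrite /S2 (negbTE ij)| rewrite h3 ltnW].
  - move=> i i' iA i'A; case: (eqVneq i j) => [e|ij]; case: (eqVneq i' j) => [e'|ij'].
    + by rewrite e e'.
    + move=> h; have iA' : i' \in A :\ j by rewrite in_setD1 i'A ij'.
      by have [_ _ /andP [_]] := g1 i' iA'; rewrite -h ltnn.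
    + move=> h; have iA' : i \in A :\ j by rewrite in_setD1 iA ij.
      by have [_ _ /andP [_]] := g1 i iA'; rewrite h ltnn.
    + apply: g2; by rewrite in_setD1 ?iA ?i'A ?ij ?ij'.
  - move=> i iA; have ij : i != j by apply/eqP => ij; move: iA; rewrite ij jA.
    by rewrite g3 ?in_setD1 ?(negbTE iA) ?andbF // /S2 (negbTE ij).
move=> f; rewrite count_cat count_map C1.
rewrite (eq_count (a2 := fun t : tile I V => inbox t.2 f)) // C2.
rewrite /inbox; case: (boolP (f j \in X)) => fX.
- have -> : [forall i, f i \in S2 i] = false.
    by apply/negbTE/negP => /forallP /(_ j); rewrite /S2 eqxx in_setD fX.
  rewrite addn0; congr nat_of_bool; apply/forallP/forallP => h i; have := h i; rewrite /S1;
    case: eqP => [->|//]; first by move=> _; exact: (subsetP XS).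
  by [].
- have -> : [forall i, f i \in S1 i] = false.
    by apply/negbTE/negP => /forallP /(_ j); rewrite /S1 eqxx (negbTE fX).
  rewrite add0n; congr nat_of_bool; apply/forallP/forallP => h i; have := h i; rewrite /S2;
    case: eqP => [->|//]; rewrite ?in_setD ?fX //.
Qed.

Definition mkperm M (tau : 'I_M -> nat) : 'S_M :=
  odflt 1%g [pick s : 'S_M | [forall i, (s i : nat) == (tau i).-1]].

Lemma mkpermE M (tau : 'I_M -> nat) :
  (forall i, 0 < tau i <= M) -> injective tau -> forall i, (mkperm tau i : nat) = (tau i).-1.
Proof.
move=> hb hinj; rewrite /mkperm; case: pickP => [s /forallP h i|].
  by apply/eqP; apply: h.
have hlt i : (tau i).-1 < M by case/andP: (hb i) => h1 h2; rewrite prednK.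
pose f i := Ordinal (hlt i).
have finj : injective f.
  move=> i j /(congr1 val) /= h; apply: hinj.
  by have /andP [hi _] := hb i; have /andP [hj _] := hb j; rewrite -(prednK hi) -(prednK hj) h.
move/(_ (perm finj)) => /negbT/negP []; apply/forallP => i; by rewrite permE.
Qed.

Theorem mainTheorem6 (c : nat) (hc : 1 <= c) (a b : nat) (ha : 1 <= a) (hab : a <= b) :
  exists Bs : seq (block (cF c) a b), is_tiling Bs.
Proof.
set M := nlev a b.
pose S := fun i : 'I_M => level (cF c) b (a + i).
have hab' i : a + (i : 'I_M) <= b.
  by move: (ltn_ord i); rewrite /M ltnS -(leq_add2l a) subnKC.
have cS i : #|S i| = c * (a + i).
  have hF : cF c (a + i) = c * (a + i).
    by rewrite /cF; case: eqP => // /eqP; rewrite addn_eq0 => /andP [/eqP a0]; move: ha; rewrite a0.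
  rewrite /S /level card_ltset -?hF //.
  have hi : a + i < b.+1 by rewrite ltnS hab'.
  exact: (@leq_bigmax_cond _ xpredT (fun s : 'I_b.+1 => cF c s) (Ordinal hi) isT).
have [T [G C]] : exists T, tiling c [set: 'I_M] M S T.
  apply: (@main_gen _ _ c M a [set: 'I_M] S (fun i => a + i)).
  - by move=> i _; rewrite cS leq_addr ltn_add2l ltn_ord.
  - by move=> i j _ _ /eqP; rewrite eqn_add2l => /eqP /val_inj.
  - move=> t /andP [t1 t2]; have ht : t - a < M by rewrite ltn_subLR.
    by exists (Ordinal ht); rewrite // /= subnKC.
pose g := fun t : tile 'I_M (vtx (cF c) b) =>
  (mkperm t.1, [ffun i => t.2 i]) : block (cF c) a b.
have chE t f : (f \in block_chains (g t)) = inbox t.2 f.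
  by rewrite /block_chains inE /inbox; apply: eq_forallb => i; rewrite ffunE.
exists (map g T); split.
- move=> B /in_map_In [t [/G [g1 g2 _] ->]]; apply/forallP => i /=.
  have [h1 h2 h3] := g1 i (in_setT i).
  have hb j : 0 < t.1 j <= M by have [] := g1 j (in_setT j).
  have hinj : injective t.1 by move=> x y; apply: g2; apply: in_setT.
  rewrite ffunE h1 /= mkpermE // prednK; last by case/andP: h3.
  rewrite h2 /cF; case: (t.1 i) h3 => // n _; by rewrite eqxx.
- move=> j k hj hk jk B0; apply/pred0P => f /=; apply/negbTE/negP => /andP [].
  rewrite size_map in hj hk.
  pose t0 : tile 'I_M (vtx (cF c) b) := (fun _ => 0, fun _ => set0).
  rewrite (nth_map t0) // (nth_map t0) // !chE => h1 h2; apply: jk.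
  apply: (count_nth_uniq (p := fun t : tile _ _ => inbox t.2 f)) h1 h2 => //.
  by rewrite C; case: (inbox S f).
- apply/setP => f; rewrite in_bigcup_seq has_map.
  rewrite (eq_has (a2 := fun t : tile _ _ => inbox t.2 f)); last by move=> t /=; rewrite chE.
  rewrite has_count C /layer_chains inE /inbox; by case: [forall i, _].
Qed.
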